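(* Let $\mathbb Y^{(\mathcal K)}$ be the stationary Markov chain on $I^2\times\{0,1\}$ with transition matrix $\mathcal K$ and stationary law $\zeta$, and $\mathbb Y^{(\mathcal A)}$ the stationary Markov chain on $I^2\times\mathcal E^*$ with transition matrix $\mathcal A$ and stationary law $\eta$. Then $$h(\mathbb Y^{(\mathcal A)})=h(\mathbb Y^{(\mathcal K)})+\sum_{i\in I}\mu(i)P(i,\mathcal E)H(D^i),\qquad H(D^i)=-\sum_{\delta\in\mathcal E}\frac{P(i,\delta)}{P(i,\mathcal E)}\log\frac{P(i,\delta)}{P(i,\mathcal E)},$$ and $$h(\mathbb Y^{(\mathcal A)})=-(1-\gamma)\sum_{j\in I}\mu(j)\log\mu(j)-\sum_{i,j\in I}\mu(i)P(i,j)\log P(i,j)-\sum_{i\in I,\delta\in\mathcal E}\mu(i)P(i,\delta)\log P(i,\delta).$$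
   Context: $I$ and $\mathcal E$ are disjoint countable sets, $\mathcal E\ne\emptyset$; $P$ is a stochastic matrix on $I\cup\mathcal E$ with all $\epsilon\in\mathcal E$ absorbing, irreducible restriction $P_I$ to $I$, $\sum_{i\in I}P(i,\mathcal E)>0$ where $P(i,\mathcal E)=\sum_{\epsilon\in\mathcal E}P(i,\epsilon)$, and $\mathcal E$ reached a.s. from every $i\in I$. $\mu$ is a quasi-stationary distribution of $P_I$: a probability on $I$ with $\mu^tP_I=\gamma\mu^t$, $\gamma=\sum_{i,j\in I}\mu(i)P(i,j)\in(0,1)$. Terms with $P(i,\mathcal E)=0$ contribute $0$. The matrix $\mathcal K$ on $I^2\times\{0,1\}$: $\mathcal K((i,j,a),(l,k,b))=0$ if $l\ne j$, and $\mathcal K((i,j,a),(j,k,b))=P(j,k)\mathbf 1(b=1)+P(j,\mathcal E)\mu(k)\mathbf 1(b=0)$; stationary law $\zeta(i,j,a)=\mu(i)P(i,j)\mathbf 1(a=1)+\mu(i)P(i,\mathcal E)\mu(j)\mathbf 1(a=0)$. Let $\mathcal E^*=\mathcal E\cup\{o\}$ with $o\notin I\cup\mathcal E$. The matrix $\mathcal A$ on $I^2\times\mathcal E^*$: $\mathcal A((i,j,\delta),(l,k,\epsilon))=0$ if $l\neq j$, $=P(j,k)$ if $l=j,\epsilon=o$, and $=P(j,\epsilon)\mu(k)$ if $l=j,\epsilon\in\mathcal E$; stationary law $\eta(i,j,\delta)=\mu(i)P(i,j)\mathbf 1(\delta=o)+\mu(i)P(i,\delta)\mu(j)\mathbf 1(\delta\in\mathcal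 E)$. For a stationary Markov chain $\mathbb Z$ with transition matrix $R$ and stationary law $\nu$, $h(\mathbb Z)=-\sum_a\nu(a)\sum_bR(a,b)\log R(a,b)$ (with $0\log 0=0$). *)

(* Defs.v *)
From HB Require Import structures.
From mathcomp Require Import all_boot all_order all_algebra.
From mathcomp Require Import all_classical all_reals all_analysis.
Set Implicit Arguments. Unset Strict Implicit. Unset Printing Implicit Defensive.
Import Order.TTheory GRing.Theory Num.Theory.
Local Open Scope ring_scope.
Local Open Scope ereal_scope.
Local Open Scope classical_set_scope.

Section Defs.
Context {R : realType} {I E : countType}.
(* The state space I ∪ E (disjoint) is the sum type I + E. *)
Variable P : I + E -> I + E -> R.

Definition PE (i : I) : R := fine (\esum_(e in [set: E]) (P (inl i) (inr e))%:E).

Definition stochastic : Prop :=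
  (forall x y, (0 <= P x y)%R) /\ (forall x, \esum_(y in [set: I + E]) (P x y)%:E = 1).

Definition absorbing_E : Prop := forall e : E, P (inr e) (inr e) = 1%R.

Definition irreducible_I : Prop :=
  forall i j : I, exists s : seq I,
    path (fun a b => (0 < P (inl a) (inl b))%R) i s && (last i s == j).

(* survival probability P_i(X_1,...,X_n in I) = sum_j P_I^n(i,j) *)
Fixpoint surv (n : nat) (i : I) : \bar R :=
  match n with
  | 0%N => 1
  | n'.+1 => \esum_(j in [set: I]) ((P (inl i) (inl j))%:E * surv n' j)
  end.

(* E is reached a.s. from every i in I *)
Definition reaches_E_as : Prop := forall i : I, (fun n => surv n i) @ \oo --> 0.

Variable mu : I -> R.

Definition prob_on_I : Prop :=
  (forall i, (0 <= mu i)%R) /\ \esum_(i in [set: I]) (mu i)%:E = 1.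

Definition gamma_eq (g : R) : Prop :=
  g%:E = \esum_(i in [set: I]) \esum_(j in [set: I]) (mu i * P (inl i) (inl j))%:E.

Definition qsd_eq (g : R) : Prop :=
  forall j : I, \esum_(i in [set: I]) (mu i * P (inl i) (inl j))%:E = (g * mu j)%:E.

(* Matrix K on I^2 x {0,1} (bool: true = 1, false = 0) *)
Definition Kmat (x y : I * I * bool) : R :=
  let: (_, j, _) := x in
  let: (l, k, b) := y in
  if l == j then (if b then P (inl j) (inl k) : R else (PE j * mu k)%R) else 0%R.

Definition zeta_law (x : I * I * bool) : R :=
  let: (i, j, a) := x in
  if a then (mu i * P (inl i) (inl j))%R else (mu i * PE i * mu j)%R.

(* E* = E ∪ {o} is option E, with o = None *)
Definition Amat (x y : I * I * option E) : R :=
  let: (_, j, _) := x in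
  let: (l, k, eps) := y in
  if l == j then
    match eps with
    | None => P (inl j) (inl k)
    | Some e => (P (inl j) (inr e) * mu k)%R
    end
  else 0%R.

Definition eta_law (x : I * I * option E) : R :=
  let: (i, j, d) := x in
  match d with
  | None => (mu i * P (inl i) (inl j))%R
  | Some e => (mu i * P (inl i) (inr e) * mu j)%R
  end.

Definition HD (i : I) : \bar R :=
  \esum_(d in [set: E])
    (- ((P (inl i) (inr d) / PE i) * ln (P (inl i) (inr d) / PE i)))%:E.

End Defs.

(* entropy rate h(Z) = - sum_a nu(a) sum_b R(a,b) log R(a,b), with 0 log 0 = 0
   (ln 0 = 0 in MathComp-Analysis); all summands are nonnegative, so the
   sums are taken in [0, +oo] *)
Definition entropy_rate {R : realType} {T : choiceType} (nu : T -> R)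
    (Rm : T -> T -> R) : \bar R :=
  \esum_(a in [set: T]) ((nu a)%:E *
     \esum_(b in [set: T]) (- (Rm a b * ln (Rm a b)))%:E).

(* Main.v *)
Require Import Defs.
From HB Require Import structures.
From mathcomp Require Import all_boot all_order all_algebra.
From mathcomp Require Import all_classical all_reals all_analysis.
From mathcomp Require Import ring lra.
Import Order.TTheory GRing.Theory Num.Theory.
Local Open Scope ring_scope.
Section RealTools.
Context {R : realType}.
Implicit Types x y a b q s : R.

Lemma ent_ge0 x : 0 <= x -> x <= 1 -> 0 <= - (x * ln x).
Proof. by move=> x0 x1; rewrite oppr_ge0 mulr_ge0_le0 // ln_le0. Qed.

Lemma ent_mul a b : 0 <= a -> 0 <= b ->
  - ((a * b) * ln (a * b)) = b * (- (a * ln a)) + a * (- (b * ln b)).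
Proof.
rewrite le_eqVlt => /orP[/eqP<-|a0]; first by move=> *; rewrite !mul0r; ring.
rewrite le_eqVlt => /orP[/eqP<-|b0]; first by rewrite !mulr0 !mul0r; ring.
rewrite lnM ?posrE //; ring.
Qed.

Lemma ent_div q s : 0 <= q -> q <= s ->
  - (q * ln q) = - (q * ln s) + s * (- ((q / s) * ln (q / s))).
Proof.
rewrite le_eqVlt => /orP[/eqP<-|q0] qs; first by move=> *; rewrite !mul0r; ring.
have s0 : 0 < s by apply: lt_le_trans qs.
rewrite ln_div ?posrE // mulrN mulrA [s * (q / s)]mulrC divfK ?gt_eqF //; ring.
Qed.

Lemma div_le1 q s : 0 <= q -> q <= s -> q / s <= 1.
Proof.
move=> q0 qs; have [->|s0] := eqVneq s 0; first by rewrite invr0 mulr0.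
have sp : 0 < s by rewrite lt_def s0 (le_trans q0 qs).
by rewrite ler_pdivrMr // mul1r.
Qed.

End RealTools.

Local Open Scope ereal_scope.
Local Open Scope classical_set_scope.
Section Tools.
Context {R : realType}.

Lemma esumZl_le (T : choiceType) (S : set T) (c : R) (a : T -> \bar R) :
  (0 <= c)%R -> (forall x, 0 <= a x) ->
  \esum_(x in S) (c%:E * a x) <= c%:E * \esum_(x in S) a x.
Proof.
move=> c0 a0; apply: ge_ereal_sup => _ [X [finX XS]] <-.
rewrite -ge0_mule_fsumr //; apply: lee_wpmul2l; first by rewrite lee_fin.
by apply: ereal_sup_ubound; exists X.
Qed.

Lemma esumZl (T : choiceType) (S : set T) (c : R) (a : T -> \bar R) :
  (0 <= c)%R -> (forall x, 0 <= a x) ->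
  \esum_(x in S) (c%:E * a x) = c%:E * \esum_(x in S) a x.
Proof.
move=> c0 a0; have [->|cn0] := eqVneq c 0%R.
  by rewrite mul0e esum1 // => x _; rewrite mul0e.
apply/eqP; rewrite eq_le esumZl_le //=.
have ca0 x : 0 <= c%:E * a x by rewrite mule_ge0 // lee_fin.
have ci0 : (0 <= c^-1)%R by rewrite invr_ge0.
have := @esumZl_le T S c^-1 (fun x => c%:E * a x) ci0 ca0.
have -> : (fun x => c^-1%:E * (c%:E * a x)) = a.
  by apply: funext => x; rewrite muleA -EFinM mulVf // mul1e.
move=> H; have := lee_wpmul2l (x := c%:E) _ H; rewrite lee_fin c0 => /(_ isT).
by rewrite muleA -EFinM mulfV // mul1e.
Qed.

Lemma esum_prodT (A B : choiceType) (F : A * B -> \bar R) :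
  (forall t, 0 <= F t) ->
  \esum_(t in [set: A * B]) F t = \esum_(a in [set: A]) \esum_(b in [set: B]) F (a, b).
Proof.
move=> F0; rewrite (esum_esum (I := [set: A]) (J := fun=> [set: B]) (a := fun a b => F (a, b))) //.
have -> : [set: A] `*`` (fun=> [set: B]) = [set: A * B].
  by apply/seteqP; split => // -[].
by apply: eq_esum => -[].
Qed.

Lemma esum_swap (A B : choiceType) (F : A -> B -> \bar R) :
  (forall a b, 0 <= F a b) ->
  \esum_(a in [set: A]) \esum_(b in [set: B]) F a b =
  \esum_(b in [set: B]) \esum_(a in [set: A]) F a b.
Proof.
move=> F0.
rewrite -(@esum_prodT A B (fun t => F t.1 t.2) (fun t => F0 _ _)).
rewrite -(@esum_prodT B A (fun t => F t.2 t.1) (fun t => F0 _ _)).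
rewrite (reindex_esum [set: B * A] [set: A * B] (fun t => (t.2, t.1))) //.
split.
- by move=> t.
- by move=> [? ?] [? ?] _ _ [-> ->].
- by move=> [a b] _; exists (b, a).
Qed.

Lemma esum_ge_term (T : choiceType) (S : set T) (a : T -> \bar R) t :
  (forall x, 0 <= a x) -> S t -> a t <= \esum_(x in S) a x.
Proof.
move=> a0 St; apply: esum_ge; exists [set t].
  by split; [exact: finite_set1| move=> x ->].
by rewrite fsbig_set1.
Qed.

Lemma esum_single (T : choiceType) (F : T -> \bar R) j :
  0 <= F j ->
  \esum_(l in [set: T]) (if l == j then F l else 0) = F j.
Proof.
move=> F0; rewrite -(esum_set1 (a := F)) // [RHS]esum_mkcond; apply: eq_esum => l _.
by rewrite in_set1.
Qed.

Lemma esum_split_img (T : choiceType) (Bs : set T) (g : T -> \bar R) :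
  (forall x, 0 <= g x) ->
  \esum_(x in [set: T]) g x = \esum_(x in Bs) g x + \esum_(x in ~` Bs) g x.
Proof.
by move=> g0; rewrite (esumID Bs) // ?setTI.
Qed.

Lemma esum_option (T : choiceType) (g : option T -> \bar R) :
  (forall x, 0 <= g x) ->
  \esum_(x in [set: option T]) g x = g None + \esum_(e in [set: T]) g (Some e).
Proof.
move=> g0; rewrite (@esum_split_img _ [set None]) // esum_set1 //.
have -> : ~` [set None] = Some @` [set: T].
  apply/seteqP; split => [[e|] //= _|]; first by exists e.
  by move=> _ [e _ <-].
by rewrite esum_image //; move=> x y _ _ [].
Qed.

Lemma esum_bool (g : bool -> \bar R) :
  (forall x, 0 <= g x) ->
  \esum_(x in [set: bool]) g x = g true + g false.
Proof.
move=> g0; rewrite (@esum_split_img _ [set true]) // esum_set1 //.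
have -> : ~` [set true] = [set false].
  by apply/seteqP; split => [[]|[]] //=.
by rewrite esum_set1.
Qed.

Lemma esum_sumtype (A B : choiceType) (g : A + B -> \bar R) :
  (forall x, 0 <= g x) ->
  \esum_(x in [set: A + B]) g x =
  \esum_(a in [set: A]) g (inl a) + \esum_(b in [set: B]) g (inr b).
Proof.
move=> g0; rewrite (@esum_split_img _ (inl @` [set: A])) //.
have -> : ~` (inl @` [set: A]) = inr @` [set: B].
  apply/seteqP; split => [[a|b] /= H|].
  - by exfalso; apply: H; exists a.
  - by exists b.
  by move=> _ [b _ <-] [a _].
rewrite esum_image; last by move=> x y _ _ [].
by rewrite esum_image //; move=> x y _ _ [].
Qed.

End Tools.


Local Notation ent x := (- (x * ln x))%R.

Section Main.
Context {R : realType} {I E : countType}.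
Context (P : I + E -> I + E -> R) (mu : I -> R) (gamma : R).
Context (HP0 : forall x y, (0 <= P x y)%R)
        (HProw : forall x, \esum_(y in [set: I + E]) (P x y)%:E = 1)
        (Hmu0 : forall i, (0 <= mu i)%R)
        (Hmu1 : \esum_(i in [set: I]) (mu i)%:E = 1)
        (Hgam : gamma%:E = \esum_(i in [set: I]) \esum_(j in [set: I]) (mu i * P (inl i) (inl j))%:E)
        (Hqsd : forall j, \esum_(i in [set: I]) (mu i * P (inl i) (inl j))%:E = (gamma * mu j)%:E).

Lemma P_le1 x y : (P x y <= 1)%R.
Proof.
have := @esum_ge_term _ _ [set: I + E] (fun y => (P x y)%:E) y (fun y => HP0 _ _) Logic.I.
by rewrite HProw lee_fin.
Qed.

Lemma mu_le1 i : (mu i <= 1)%R.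
Proof.
have := @esum_ge_term _ _ [set: I] (fun i => (mu i)%:E) i (fun i => Hmu0 _) Logic.I.
by rewrite Hmu1 lee_fin.
Qed.

Lemma row_split i : \esum_(k in [set: I]) (P (inl i) (inl k))%:E
   + \esum_(e in [set: E]) (P (inl i) (inr e))%:E = 1.
Proof. by rewrite -(HProw (inl i)) [RHS]esum_sumtype // => y; rewrite lee_fin. Qed.

Lemma PE_E i : (PE P i)%:E = \esum_(e in [set: E]) (P (inl i) (inr e))%:E.
Proof.
have H0 : 0 <= \esum_(e in [set: E]) (P (inl i) (inr e))%:E.
  by apply: esum_ge0 => e _; rewrite lee_fin.
have H1 : \esum_(e in [set: E]) (P (inl i) (inr e))%:E <= 1.
  rewrite -(row_split i) leeDr //; by apply: esum_ge0 => e _; rewrite lee_fin.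
rewrite /PE fineK // ge0_fin_numE //; exact: (le_lt_trans H1 (ltry _)).
Qed.

Lemma PE_ge0 i : (0 <= PE P i)%R.
Proof. by rewrite -lee_fin PE_E; apply: esum_ge0 => e _; rewrite lee_fin. Qed.

Lemma q_le_PE i e : (P (inl i) (inr e) <= PE P i)%R.
Proof.
rewrite -lee_fin PE_E; apply: (@esum_ge_term _ _ _ (fun e => (P (inl i) (inr e))%:E)) => //.
by move=> ?; rewrite lee_fin.
Qed.

Lemma PE_le1 i : (PE P i <= 1)%R.
Proof.
rewrite -lee_fin -(row_split i) -PE_E leeDr //.
by apply: esum_ge0 => e _; rewrite lee_fin.
Qed.

Lemma row_PE i : \esum_(k in [set: I]) (P (inl i) (inl k))%:E + (PE P i)%:E = 1.
Proof. by rewrite PE_E row_split. Qed.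

Ltac nn := repeat first
 [ progress rewrite ?lee_fin
 | apply: esum_ge0 => ? _
 | apply: adde_ge0
 | apply: mule_ge0
 | apply: mulr_ge0
 | apply: addr_ge0
 | apply: ent_ge0
 | apply: div_le1; [exact: HP0| exact: q_le_PE]
 | apply: mulr_ile1
 | exact: HP0 | exact: Hmu0 | exact: PE_ge0 | exact: P_le1 | exact: mu_le1
 | exact: PE_le1 
 | progress rewrite invr_ge0 ].


Lemma sum_muPE : \esum_(i in [set: I]) (mu i * PE P i)%:E = (1 - gamma)%:E.
Proof.
have H : gamma%:E + \esum_(i in [set: I]) (mu i * PE P i)%:E = 1.
  rewrite -Hmu1 Hgam -esumD; last 2 first.
  - by move=> i _; nn.
  - by move=> i _; nn.
  apply: eq_esum => i _.
  rewrite -[X in _ = X]mule1 -(row_PE i) ge0_muleDr; last 2 first.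
  - by nn.
  - by nn.
  rewrite -esumZl; last 2 first.
  - exact: Hmu0.
  - by move=> k; nn.
  by rewrite EFinM.
move: (\esum_(i in [set: I]) (mu i * PE P i)%:E) H => X.
case: X => [r | | ] H.
- by move: H; rewrite -EFinD => -[<-]; congr EFin; ring.
- by rewrite addey in H.
- by rewrite addeNy in H.
Qed.

Lemma marg j :
  \esum_(i in [set: I]) ((mu i * P (inl i) (inl j))%:E + (mu i * PE P i * mu j)%:E)
  = (mu j)%:E.
Proof.
rewrite esumD; last 2 first.
- by move=> i _; nn.
- by move=> i _; nn.
rewrite Hqsd.
transitivity ((gamma * mu j)%:E + (mu j)%:E * \esum_(i in [set: I]) (mu i * PE P i)%:E).
  congr (_ + _); rewrite -esumZl; last 2 first.
  - exact: Hmu0.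
  - by move=> i; nn.
  by apply: eq_esum => i _; rewrite -EFinM mulrC.
by rewrite sum_muPE -EFinM -EFinD; congr EFin; ring.
Qed.

Lemma marg_eta j :
  \esum_(i in [set: I]) \esum_(d in [set: option E]) (eta_law P mu ((i, j), d))%:E
  = (mu j)%:E.
Proof.
rewrite -marg; apply: eq_esum => i _.
rewrite esum_option; last by case=> [e|]; rewrite /= lee_fin; nn.
congr (_ + _).
transitivity (\esum_(e in [set: E]) ((mu i * mu j)%:E * (P (inl i) (inr e))%:E)).
  by apply: eq_esum => e _ /=; rewrite -EFinM; congr EFin; ring.
rewrite esumZl; last 2 first.
- by nn.
- by move=> e; nn.
by rewrite -PE_E -EFinM; congr EFin; ring.
Qed.

Lemma marg_zeta j :
  \esum_(i in [set: I]) \esum_(d in [set: bool]) (zeta_law P mu ((i, j), d))%:E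
  = (mu j)%:E.
Proof.
rewrite -marg; apply: eq_esum => i _.
by rewrite esum_bool //; case; rewrite /= lee_fin; nn.
Qed.


Lemma wsum (X T : choiceType) (w : I * I * X -> R) (F : I -> T -> R) :
  (forall t, (0 <= w t)%R) -> (forall j k, (0 <= F j k)%R) ->
  (forall j, \esum_(i in [set: I]) \esum_(x in [set: X]) (w ((i, j), x))%:E = (mu j)%:E) ->
  \esum_(t in [set: I * I * X]) ((w t)%:E * \esum_(k in [set: T]) (F t.1.2 k)%:E)
  = \esum_(j in [set: I]) \esum_(k in [set: T]) (mu j * F j k)%:E.
Proof.
move=> w0 F0 Hw.
rewrite esum_prodT; last by move=> t; apply: mule_ge0; [rewrite lee_fin|apply: esum_ge0 => ? _; rewrite lee_fin].
rewrite esum_prodT; last by move=> t; apply: esum_ge0 => ? _; apply: mule_ge0; [rewrite lee_fin|apply: esum_ge0 => ? _; rewrite lee_fin].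
rewrite /= esum_swap; last by move=> *; apply: esum_ge0 => ? _; apply: mule_ge0; [rewrite lee_fin|apply: esum_ge0 => ? _; rewrite lee_fin].
apply: eq_esum => j _.
transitivity (\esum_(i in [set: I]) \esum_(x in [set: X]) \esum_(k in [set: T]) (w ((i, j), x) * F j k)%:E).
  apply: eq_esum => i _; apply: eq_esum => x _; rewrite -esumZl //; try (by apply: eq_esum => k _; rewrite EFinM).
  by move=> k; rewrite lee_fin.
transitivity (\esum_(i in [set: I]) \esum_(k in [set: T]) \esum_(x in [set: X]) (w ((i, j), x) * F j k)%:E).
  by apply: eq_esum => i _; apply: esum_swap => *; rewrite lee_fin mulr_ge0.
rewrite esum_swap; last by move=> *; apply: esum_ge0 => ? _; rewrite lee_fin mulr_ge0.
apply: eq_esum => k _.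
transitivity (\esum_(i in [set: I]) ((F j k)%:E * \esum_(x in [set: X]) (w ((i, j), x))%:E)).
  apply: eq_esum => i _; rewrite -esumZl //; try (by apply: eq_esum => x _; rewrite -EFinM mulrC).
  by move=> x; rewrite lee_fin.
rewrite esumZl //; last by move=> i; apply: esum_ge0 => ? _; rewrite lee_fin.
by rewrite Hw -EFinM mulrC.
Qed.

Lemma wsum0 (X : choiceType) (w : I * I * X -> R) (F : I -> R) :
  (forall t, (0 <= w t)%R) -> (forall j, (0 <= F j)%R) ->
  (forall j, \esum_(i in [set: I]) \esum_(x in [set: X]) (w ((i, j), x))%:E = (mu j)%:E) ->
  \esum_(t in [set: I * I * X]) ((w t)%:E * (F t.1.2)%:E)
  = \esum_(j in [set: I]) (mu j * F j)%:E.
Proof.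
move=> w0 F0 Hw.
rewrite esum_prodT; last by move=> t; apply: mule_ge0; rewrite lee_fin.
rewrite esum_prodT; last by move=> t; apply: esum_ge0 => ? _; apply: mule_ge0; rewrite lee_fin.
rewrite /= esum_swap; last by move=> *; apply: esum_ge0 => ? _; apply: mule_ge0; rewrite lee_fin.
apply: eq_esum => j _.
transitivity (\esum_(i in [set: I]) ((F j)%:E * \esum_(x in [set: X]) (w ((i, j), x))%:E)).
  apply: eq_esum => i _; rewrite -esumZl //; try (by apply: eq_esum => x _; rewrite muleC).
  by move=> x; rewrite lee_fin.
rewrite esumZl //; last by move=> i; apply: esum_ge0 => ? _; rewrite lee_fin.
by rewrite Hw -EFinM mulrC.
Qed.


Lemma Amat_01 x y : (0 <= Amat P mu x y)%R /\ (Amat P mu x y <= 1)%R.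
Proof.
case: x => [[i j] d]; case: y => [[l k] e]; rewrite /Amat /=.
case: (l == j); last by split.
by case: e => [e|]; split; nn.
Qed.

Lemma Kmat_01 x y : (0 <= Kmat P mu x y)%R /\ (Kmat P mu x y <= 1)%R.
Proof.
case: x => [[i j] a]; case: y => [[l k] b]; rewrite /Kmat /=.
case: (l == j); last by split.
by case: b; split; nn.
Qed.

Lemma swap_mu (T : choiceType) (G : T -> R) :
  (forall e, (0 <= G e)%R) ->
  \esum_(k in [set: I]) \esum_(e in [set: T]) (mu k * G e)%:E
  = \esum_(e in [set: T]) (G e)%:E.
Proof.
move=> G0; rewrite esum_swap; last by move=> *; nn; apply: G0.
apply: eq_esum => e _.
transitivity (\esum_(k in [set: I]) ((G e)%:E * (mu k)%:E)).
  by apply: eq_esum => k _; rewrite -EFinM mulrC.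
by rewrite esumZl // ?Hmu1 ?mule1 //; move=> k; nn.
Qed.

Lemma innerA i j d :
  \esum_(y in [set: I * I * option E]) (ent (Amat P mu ((i, j), d) y))%:E
  = \esum_(k in [set: I]) (ent (P (inl j) (inl k)))%:E
    + \esum_(e in [set: E]) (ent (P (inl j) (inr e)))%:E
    + \esum_(k in [set: I]) (PE P j * ent (mu k))%:E.
Proof.
have A0 y : 0 <= (ent (Amat P mu ((i, j), d) y))%:E.
  by case: (Amat_01 ((i, j), d) y) => ? ?; nn.
rewrite esum_prodT //.
rewrite esum_prodT; last by move=> t; apply: esum_ge0.
transitivity (\esum_(l in [set: I]) (if l == j then \esum_(k in [set: I])
   \esum_(e in [set: option E]) (ent (Amat P mu ((i, j), d) ((j, k), e)))%:E else 0)).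
  apply: eq_esum => l _; case: eqP => [->//|ne].
  apply: esum1 => k _; apply: esum1 => e _.
  by rewrite /Amat /= (introF eqP ne) mul0r oppr0.
rewrite esum_single; last by apply: esum_ge0 => ? _; apply: esum_ge0.
transitivity (\esum_(k in [set: I]) ((ent (P (inl j) (inl k)))%:E +
   (\esum_(e in [set: E]) (mu k * ent (P (inl j) (inr e)))%:E +
    \esum_(e in [set: E]) (P (inl j) (inr e) * ent (mu k))%:E))).
  apply: eq_esum => k _; rewrite esum_option //.
  rewrite /Amat /= eqxx; congr (_ + _).
  rewrite -esumD; [|by move=> *; nn|by move=> *; nn].
  by apply: eq_esum => e _; rewrite ent_mul // EFinD.
rewrite esumD; [|by move=> *; nn|by move=> *; nn].
rewrite esumD; [|by move=> *; nn|by move=> *; nn].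
rewrite addeA swap_mu; last by move=> e; nn.
congr (_ + _); apply: eq_esum => k _.
transitivity (\esum_(e in [set: E]) ((ent (mu k))%:E * (P (inl j) (inr e))%:E)).
  by apply: eq_esum => e _; rewrite -EFinM mulrC.
rewrite esumZl; [|nn|by move=> e; nn].
by rewrite -PE_E -EFinM mulrC.
Qed.



Lemma innerK i j a :
  \esum_(y in [set: I * I * bool]) (ent (Kmat P mu ((i, j), a) y))%:E
  = \esum_(k in [set: I]) (ent (P (inl j) (inl k)))%:E
    + (ent (PE P j))%:E
    + \esum_(k in [set: I]) (PE P j * ent (mu k))%:E.
Proof.
have A0 y : 0 <= (ent (Kmat P mu ((i, j), a) y))%:E.
  by case: (Kmat_01 ((i, j), a) y) => ? ?; nn.
rewrite esum_prodT //.
rewrite esum_prodT; last by move=> t; apply: esum_ge0.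
transitivity (\esum_(l in [set: I]) (if l == j then \esum_(k in [set: I])
   \esum_(e in [set: bool]) (ent (Kmat P mu ((i, j), a) ((j, k), e)))%:E else 0)).
  apply: eq_esum => l _; case: eqP => [->//|ne].
  apply: esum1 => k _; apply: esum1 => e _.
  by rewrite /Kmat /= (introF eqP ne) mul0r oppr0.
rewrite esum_single; last by apply: esum_ge0 => ? _; apply: esum_ge0.
transitivity (\esum_(k in [set: I]) ((ent (P (inl j) (inl k)))%:E +
   ((mu k * ent (PE P j))%:E + (PE P j * ent (mu k))%:E))).
  apply: eq_esum => k _; rewrite esum_bool //.
  rewrite /Kmat /= eqxx; congr (_ + _).
  by rewrite ent_mul ?EFinD //; nn.
rewrite esumD; [|by move=> *; nn|by move=> *; nn].
rewrite esumD; [|by move=> *; nn|by move=> *; nn].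
rewrite addeA; congr (_ + _ + _).
transitivity (\esum_(k in [set: I]) ((ent (PE P j))%:E * (mu k)%:E)).
  by apply: eq_esum => e _; rewrite -EFinM mulrC.
rewrite esumZl; [|nn|by move=> e; nn].
by rewrite Hmu1 mule1.
Qed.


Lemma eta_ge0 t : (0 <= eta_law P mu t)%R.
Proof. by case: t => [[i j] [e|]] /=; nn. Qed.

Lemma zeta_ge0 t : (0 <= zeta_law P mu t)%R.
Proof. by case: t => [[i j] [|]] /=; nn. Qed.

Lemma hA : entropy_rate (eta_law P mu) (Amat P mu) =
  \esum_(j in [set: I]) \esum_(k in [set: I]) (mu j * ent (P (inl j) (inl k)))%:E
  + \esum_(j in [set: I]) \esum_(e in [set: E]) (mu j * ent (P (inl j) (inr e)))%:E
  + \esum_(j in [set: I]) \esum_(k in [set: I]) (mu j * (PE P j * ent (mu k)))%:E.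
Proof.
rewrite /entropy_rate.
transitivity (\esum_(t in [set: I * I * option E])
  ((eta_law P mu t)%:E * (\esum_(k in [set: I]) (ent (P (inl t.1.2) (inl k)))%:E)
  + (eta_law P mu t)%:E * (\esum_(e in [set: E]) (ent (P (inl t.1.2) (inr e)))%:E)
  + (eta_law P mu t)%:E * (\esum_(k in [set: I]) (PE P t.1.2 * ent (mu k))%:E))).
  apply: eq_esum => -[[i j] d] _; rewrite innerA.
  rewrite ge0_muleDr; [|by nn|by nn].
  by rewrite ge0_muleDr; [|nn|nn].
have e0 := eta_ge0.
rewrite esumD; [|by move=> *; nn|by move=> *; nn].
rewrite esumD; [|by move=> *; nn|by move=> *; nn].
rewrite (@wsum _ _ (eta_law P mu) (fun j k => ent (P (inl j) (inl k)))); [|exact: e0|by move=> *; nn|exact: marg_eta].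
rewrite (@wsum _ _ (eta_law P mu) (fun j e => ent (P (inl j) (inr e)))); [|exact: e0|by move=> *; nn|exact: marg_eta].
rewrite (@wsum _ _ (eta_law P mu) (fun j k => (PE P j * ent (mu k))%R)); [|exact: e0|by move=> *; nn|exact: marg_eta].
by [].
Qed.

Lemma hK : entropy_rate (zeta_law P mu) (Kmat P mu) =
  \esum_(j in [set: I]) \esum_(k in [set: I]) (mu j * ent (P (inl j) (inl k)))%:E
  + \esum_(j in [set: I]) (mu j * ent (PE P j))%:E
  + \esum_(j in [set: I]) \esum_(k in [set: I]) (mu j * (PE P j * ent (mu k)))%:E.
Proof.
rewrite /entropy_rate.
transitivity (\esum_(t in [set: I * I * bool])
  ((zeta_law P mu t)%:E * (\esum_(k in [set: I]) (ent (P (inl t.1.2) (inl k)))%:E)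
  + (zeta_law P mu t)%:E * (ent (PE P t.1.2))%:E
  + (zeta_law P mu t)%:E * (\esum_(k in [set: I]) (PE P t.1.2 * ent (mu k))%:E))).
  apply: eq_esum => -[[i j] d] _; rewrite innerK.
  rewrite ge0_muleDr; [|by nn|by nn].
  by rewrite ge0_muleDr; [|nn|nn].
have e0 := zeta_ge0.
rewrite esumD; [|by move=> *; nn|by move=> *; nn].
rewrite esumD; [|by move=> *; nn|by move=> *; nn].
rewrite (@wsum _ _ (zeta_law P mu) (fun j k => ent (P (inl j) (inl k)))); [|exact: e0|by move=> *; nn|exact: marg_zeta].
rewrite (@wsum0 _ (zeta_law P mu) (fun j => ent (PE P j))); [|exact: e0|by move=> *; nn|exact: marg_zeta].
rewrite (@wsum _ _ (zeta_law P mu) (fun j k => (PE P j * ent (mu k))%R)); [|exact: e0|by move=> *; nn|exact: marg_zeta].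
by [].
Qed.


Lemma HD_ge0 i : 0 <= HD P i.
Proof. by rewrite /HD; nn. Qed.

Lemma T2split :
  \esum_(j in [set: I]) \esum_(e in [set: E]) (mu j * ent (P (inl j) (inr e)))%:E
  = \esum_(j in [set: I]) (mu j * ent (PE P j))%:E
    + \esum_(i in [set: I]) ((mu i * PE P i)%:E * HD P i).
Proof.
have lnPE j : (0 <= - ln (PE P j))%R by rewrite oppr_ge0 ln_le0 // PE_le1.
rewrite -esumD; [|by move=> *; nn|by move=> *; apply: mule_ge0; [nn|exact: HD_ge0]].
apply: eq_esum => j _.
transitivity (\esum_(e in [set: E]) ((mu j * - ln (PE P j) * P (inl j) (inr e))%:E
   + (mu j * PE P j)%:E * (ent (P (inl j) (inr e) / PE P j))%:E)).
  apply: eq_esum => e _.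
  rewrite (@ent_div _ (P (inl j) (inr e)) (PE P j) (HP0 _ _) (q_le_PE j e)).
  by rewrite -EFinM -EFinD; congr EFin; ring.
rewrite esumD; [|by move=> *; nn; apply: lnPE|by move=> *; nn].
congr (_ + _).
  transitivity (\esum_(e in [set: E]) ((mu j * - ln (PE P j))%:E * (P (inl j) (inr e))%:E)).
    by apply: eq_esum => e _; rewrite -EFinM.
  rewrite esumZl; [|nn; apply: lnPE|by move=> e; nn].
  by rewrite -PE_E -EFinM; congr EFin; ring.
rewrite esumZl; [by []|nn|by move=> e; nn].
Qed.

Lemma T3eq :
  \esum_(j in [set: I]) \esum_(k in [set: I]) (mu j * (PE P j * ent (mu k)))%:E
  = \esum_(k in [set: I]) (- ((1 - gamma) * (mu k * ln (mu k))))%:E.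
Proof.
rewrite esum_swap; last by move=> *; nn.
apply: eq_esum => k _.
transitivity (\esum_(j in [set: I]) ((ent (mu k))%:E * (mu j * PE P j)%:E)).
  by apply: eq_esum => j _; rewrite -EFinM; congr EFin; ring.
rewrite esumZl; [|nn|by move=> j; nn].
by rewrite sum_muPE -EFinM; congr EFin; ring.
Qed.

Lemma main_res :
  entropy_rate (eta_law P mu) (Amat P mu)
    = entropy_rate (zeta_law P mu) (Kmat P mu)
      + \esum_(i in [set: I]) ((mu i * PE P i)%:E * HD P i)
  /\
  entropy_rate (eta_law P mu) (Amat P mu)
    = \esum_(j in [set: I]) (- ((1 - gamma) * (mu j * ln (mu j))))%:E
      + \esum_(i in [set: I]) \esum_(j in [set: I])
          (- (mu i * (P (inl i) (inl j) * ln (P (inl i) (inl j)))))%:E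
      + \esum_(i in [set: I]) \esum_(d in [set: E])
          (- (mu i * (P (inl i) (inr d) * ln (P (inl i) (inr d)))))%:E.
Proof.
split.
  by rewrite hA hK T2split addeA addeAC.
rewrite hA T3eq addeC addeA.
congr (_ + _ + _); apply: eq_esum => i _; apply: eq_esum => j _; by rewrite mulrN.
Qed.

End Main.

Theorem proposition4 (R : realType) (I E : countType)
  (P : I + E -> I + E -> R) (mu : I -> R) (gamma : R) :
  (exists e : E, True) ->
  stochastic P ->
  absorbing_E P ->
  irreducible_I P ->
  0 < \esum_(i in [set: I]) (PE P i)%:E ->
  reaches_E_as P ->
  prob_on_I mu ->
  gamma_eq P mu gamma ->
  (0 < gamma < 1)%R ->
  qsd_eq P mu gamma ->
  entropy_rate (eta_law P mu) (Amat P mu)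
    = entropy_rate (zeta_law P mu) (Kmat P mu)
      + \esum_(i in [set: I]) ((mu i * PE P i)%:E * HD P i)
  /\
  entropy_rate (eta_law P mu) (Amat P mu)
    = \esum_(j in [set: I]) (- ((1 - gamma) * (mu j * ln (mu j))))%:E
      + \esum_(i in [set: I]) \esum_(j in [set: I])
          (- (mu i * (P (inl i) (inl j) * ln (P (inl i) (inl j)))))%:E
      + \esum_(i in [set: I]) \esum_(d in [set: E])
          (- (mu i * (P (inl i) (inr d) * ln (P (inl i) (inr d)))))%:E.
Proof.
move=> _ [HP0 HProw] _ _ _ _ [Hmu0 Hmu1] Hgam _ Hqsd.
exact: (@main_res R I E P mu gamma HP0 HProw Hmu0 Hmu1 Hgam Hqsd).
Qed.
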